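(* Let $(X,d)$ be a totally bounded metric space with II-modulus of total boundedness $\gamma$, $\emptyset\ne F\subseteq X$ with a representation $(\tilde F_k)$, and let $G,H:\mathbb{R}_+\to\mathbb{R}_+$ have a $G$-modulus $\alpha_G$ and an $H$-modulus $\beta_H$. Let $(x_n)$ in $X$ be uniformly $(G,H)$-Fej\'er monotone w.r.t. $F$ with modulus $\chi$ and have approximate $F$-points with approximate $F$-point bound $\Phi$. Suppose $F$ is uniformly closed with moduli $\delta_F,\omega_F$. Then for all $k\in\mathbb{N}$ and $g:\mathbb{N}\to\mathbb{N}$ there exists $N\le\tilde\Psi$ such that for all $i,j\in[N,N+g(N)]$: $d(x_i,x_j)\le\frac1{k+1}$ and $x_i\in AF_k$. Here $k_0:=\max\{k,\lceil(\omega_F(k)-1)/2\rceil\}$, $\chi_{k,\delta_F}(n,m,r):=\max\{\delta_F(k),\chi(n,m,r)\}$, $c(n,r):=\max\{\chi_{k,\delta_F}(i,g(i),r)\mid i\le n\}$, $\Psi_0(0):=0$, $\Psi_0(n+1):=\Phi\big(c(\Psi_0(n),2\beta_H(2k_0+1)+1)\big)$, and $\tilde\Psi:=\Psi_0\big(\gamma(\alpha_G(2\beta_H(2k_0+1)+1))\big)$.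
   Context: II-modulus of total boundedness $\gamma$: for every $k$ and every sequence $(y_n)$ in $X$ there are $0\le i<j\le\gamma(k)$ with $d(y_i,y_j)\le\frac1{k+1}$. Representation: $F=\bigcap_k\tilde F_k$, $AF_k:=\bigcap_{l\le k}\tilde F_l$. $G$-modulus $\alpha_G$: $a\le\frac1{\alpha_G(k)+1}\Rightarrow G(a)\le\frac1{k+1}$ for all $k\in\mathbb{N}$, $a\in\mathbb{R}_+$. $H$-modulus $\beta_H$: $H(a)\le\frac1{\beta_H(k)+1}\Rightarrow a\le\frac1{k+1}$. Uniformly $(G,H)$-Fej\'er monotone with modulus $\chi:\mathbb{N}^3\to\mathbb{N}$: for all $r,n,m$, all $p\in AF_{\chi(n,m,r)}$ and all $l\le m$, $H(d(x_{n+l},p))<G(d(x_n,p))+\frac1{r+1}$. Approximate $F$-point bound: a nondecreasing $\Phi:\mathbb{N}\to\mathbb{N}$ with: for all $k$ there is $N\le\Phi(k)$ with $x_N\in AF_k$. $F$ is uniformly closed with moduli $\delta_F,\omega_F:\mathbb{N}\to\mathbb{N}$ if for all $k\in\mathbb{N}$ and $p,q\in X$: $q\in AF_{\delta_F(k)}$ and $d(p,q)\le\frac1{\omega_F(k)+1}$ imply $p\in AF_k$. *)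

(* Defs.v *)
From Stdlib Require Import Reals Lra Lia Arith.
Open Scope R_scope.

Definition is_metric {X : Type} (d : X -> X -> R) : Prop :=
  (forall x y, 0 <= d x y) /\
  (forall x y, d x y = 0 <-> x = y) /\
  (forall x y, d x y = d y x) /\
  (forall x y z, d x z <= d x y + d y z).

Definition II_modulus_tb {X : Type} (d : X -> X -> R) (gamma : nat -> nat) : Prop :=
  forall (k : nat) (y : nat -> X),
    exists i j : nat, (i < j)%nat /\ (j <= gamma k)%nat /\
      d (y i) (y j) <= 1 / (INR k + 1).

Definition Fset {X : Type} (Ftil : nat -> X -> Prop) (p : X) : Prop :=
  forall k, Ftil k p.
Definition AF {X : Type} (Ftil : nat -> X -> Prop) (k : nat) (p : X) : Prop :=
  forall l, (l <= k)%nat -> Ftil l p.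

(* Functions R_+ -> R_+ (represented as R -> R mapping R_+ into R_+). *)
Definition maps_nonneg (G : R -> R) : Prop := forall a, 0 <= a -> 0 <= G a.

Definition G_modulus (G : R -> R) (alphaG : nat -> nat) : Prop :=
  forall (k : nat) (a : R), 0 <= a ->
    a <= 1 / (INR (alphaG k) + 1) -> G a <= 1 / (INR k + 1).

Definition H_modulus (H : R -> R) (betaH : nat -> nat) : Prop :=
  forall (k : nat) (a : R), 0 <= a ->
    H a <= 1 / (INR (betaH k) + 1) -> a <= 1 / (INR k + 1).

Definition unif_GH_Fejer {X : Type} (d : X -> X -> R) (Ftil : nat -> X -> Prop)
  (G H : R -> R) (x : nat -> X) (chi : nat -> nat -> nat -> nat) : Prop :=
  forall (r n m : nat) (p : X), AF Ftil (chi n m r) p ->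
    forall l, (l <= m)%nat ->
      H (d (x (n + l)%nat) p) < G (d (x n) p) + 1 / (INR r + 1).

Definition approx_F_point_bound {X : Type} (Ftil : nat -> X -> Prop)
  (x : nat -> X) (Phi : nat -> nat) : Prop :=
  (forall a b, (a <= b)%nat -> (Phi a <= Phi b)%nat) /\
  (forall k, exists N, (N <= Phi k)%nat /\ AF Ftil k (x N)).

Definition unif_closed {X : Type} (d : X -> X -> R) (Ftil : nat -> X -> Prop)
  (deltaF omegaF : nat -> nat) : Prop :=
  forall (k : nat) (p q : X), AF Ftil (deltaF k) q ->
    d p q <= 1 / (INR (omegaF k) + 1) -> AF Ftil k p.

(* k0 := max{k, ceil((omegaF k - 1)/2)}; for a natural number w,
   ceil((w - 1)/2) = w / 2 (floor division), including w = 0 where ceil(-1/2) = 0. *)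
Definition k0 (omegaF : nat -> nat) (k : nat) : nat :=
  Nat.max k (Nat.div (omegaF k) 2).

Definition chi_kd (chi : nat -> nat -> nat -> nat) (deltaF : nat -> nat) (k : nat)
  (n m r : nat) : nat := Nat.max (deltaF k) (chi n m r).

Fixpoint max_upto (f : nat -> nat) (n : nat) : nat :=
  match n with
  | O => f O
  | S n' => Nat.max (max_upto f n') (f n)
  end.

Definition c_fun (chi : nat -> nat -> nat -> nat) (deltaF : nat -> nat) (k : nat)
  (g : nat -> nat) (n r : nat) : nat :=
  max_upto (fun i => chi_kd chi deltaF k i (g i) r) n.

Fixpoint Psi0 (Phi : nat -> nat) (chi : nat -> nat -> nat -> nat) (deltaF omegaF : nat -> nat)
  (betaH : nat -> nat) (k : nat) (g : nat -> nat) (n : nat) : nat :=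
  match n with
  | O => O
  | S n' => Phi (c_fun chi deltaF k g (Psi0 Phi chi deltaF omegaF betaH k g n')
                   (2 * betaH (2 * k0 omegaF k + 1) + 1)%nat)
  end.

Definition Psi_tilde (Phi : nat -> nat) (chi : nat -> nat -> nat -> nat)
  (deltaF omegaF : nat -> nat) (alphaG betaH gamma : nat -> nat) (k : nat) (g : nat -> nat) : nat :=
  Psi0 Phi chi deltaF omegaF betaH k g
    (gamma (alphaG (2 * betaH (2 * k0 omegaF k + 1) + 1)%nat)).

(* Main.v *)
Require Import Defs.
From Stdlib Require Import Reals Lra Lia Arith ClassicalEpsilon.
Open Scope R_scope.

Lemma max_upto_ge (f : nat -> nat) (n i : nat) : (i <= n)%nat -> (f i <= max_upto f n)%nat.
Proof.
  induction n as [|n IH]; intros Hi; simpl.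
  - replace i with 0%nat by lia. lia.
  - destruct (Nat.eq_dec i (S n)) as [->|Hne]; [lia|].
    specialize (IH ltac:(lia)). lia.
Qed.

Lemma AF_mono {X : Type} (Ftil : nat -> X -> Prop) m m' p :
  (m' <= m)%nat -> AF Ftil m p -> AF Ftil m' p.
Proof. intros Hm HA l Hl. apply HA. lia. Qed.

Lemma max_upto_mono (f : nat -> nat) n m : (n <= m)%nat -> (max_upto f n <= max_upto f m)%nat.
Proof.
  induction 1; [lia|]. simpl. lia.
Qed.

Lemma Psi0_step Phi chi deltaF omegaF betaH k g :
  (forall a b, (a <= b)%nat -> (Phi a <= Phi b)%nat) ->
  forall n, (Psi0 Phi chi deltaF omegaF betaH k g n <= Psi0 Phi chi deltaF omegaF betaH k g (S n))%nat.
Proof.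
  intros HP n. induction n as [|n IH]; [simpl; lia|].
  change (Psi0 Phi chi deltaF omegaF betaH k g (S (S n))) with
    (Phi (c_fun chi deltaF k g (Psi0 Phi chi deltaF omegaF betaH k g (S n))
                   (2 * betaH (2 * k0 omegaF k + 1) + 1)%nat)).
  simpl Psi0 at 1. apply HP. unfold c_fun. apply max_upto_mono. exact IH.
Qed.

Lemma Psi0_mono Phi chi deltaF omegaF betaH k g :
  (forall a b, (a <= b)%nat -> (Phi a <= Phi b)%nat) ->
  forall n m, (n <= m)%nat ->
  (Psi0 Phi chi deltaF omegaF betaH k g n <= Psi0 Phi chi deltaF omegaF betaH k g m)%nat.
Proof.
  intros HP n m H. induction H; [lia|].
  pose proof (Psi0_step Phi chi deltaF omegaF betaH k g HP m). lia.
Qed.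

Theorem theorem5p3 (X : Type) (d : X -> X -> R) (gamma : nat -> nat)
  (Ftil : nat -> X -> Prop) (G H : R -> R) (alphaG betaH : nat -> nat)
  (x : nat -> X) (chi : nat -> nat -> nat -> nat) (Phi : nat -> nat)
  (deltaF omegaF : nat -> nat) :
  is_metric d ->
  II_modulus_tb d gamma ->
  (exists p, Fset Ftil p) ->
  maps_nonneg G -> maps_nonneg H ->
  G_modulus G alphaG -> H_modulus H betaH ->
  unif_GH_Fejer d Ftil G H x chi ->
  approx_F_point_bound Ftil x Phi ->
  unif_closed d Ftil deltaF omegaF ->
  forall (k : nat) (g : nat -> nat),
    exists N : nat, (N <= Psi_tilde Phi chi deltaF omegaF alphaG betaH gamma k g)%nat /\
      forall i j : nat, (N <= i <= N + g N)%nat -> (N <= j <= N + g N)%nat ->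
        d (x i) (x j) <= 1 / (INR k + 1) /\ AF Ftil k (x i).
Proof.
  intros [Hd0 [_ [Hsym Htri]]] Htb _ HG0 HH0 HGm HHm HFe [HPm HPb] Hcl k g.
  set (K := (2 * k0 omegaF k + 1)%nat).
  set (b := betaH K).
  set (r := (2 * b + 1)%nat).
  set (a := Psi0 Phi chi deltaF omegaF betaH k g).
  set (Nn := fun n => proj1_sig (constructive_indefinite_description _
                 (HPb (c_fun chi deltaF k g (a n) r)))).
  assert (HN : forall n, (Nn n <= a (S n))%nat /\
                 AF Ftil (c_fun chi deltaF k g (a n) r) (x (Nn n))).
  { intro n. unfold Nn. destruct (constructive_indefinite_description _ _) as [N HN'].
    simpl. exact HN'. }
  destruct (Htb (alphaG r) (fun n => x (Nn n))) as [i0 [j0 [Hij [Hj Hdij]]]].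
  exists (Nn i0). split.
  { unfold Psi_tilde. fold K b r. fold a.
    destruct (HN i0) as [H1 _].
    assert (Hle : (S i0 <= gamma (alphaG r))%nat) by lia.
    pose proof (Psi0_mono Phi chi deltaF omegaF betaH k g HPm (S i0) (gamma (alphaG r)) Hle).
    fold a in H0. lia. }
  set (N := Nn i0). set (p := x (Nn j0)).
  assert (Hp : AF Ftil (c_fun chi deltaF k g (a j0) r) p) by apply HN.
  assert (HNa : (N <= a j0)%nat).
  { destruct (HN i0) as [H1 _].
    pose proof (Psi0_mono Phi chi deltaF omegaF betaH k g HPm (S i0) j0 ltac:(lia)).
    fold a in H0. unfold N. lia. }
  assert (Hc : (chi_kd chi deltaF k N (g N) r <= c_fun chi deltaF k g (a j0) r)%nat).
  { unfold c_fun. apply (max_upto_ge (fun i => chi_kd chi deltaF k i (g i) r)). exact HNa. }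
  unfold chi_kd in Hc.
  assert (HpChi : AF Ftil (chi N (g N) r) p) by (eapply AF_mono; [|exact Hp]; lia).
  assert (HpD : AF Ftil (deltaF k) p) by (eapply AF_mono; [|exact Hp]; lia).
  assert (HGd : G (d (x N) p) <= 1 / (INR r + 1)).
  { apply HGm; [apply Hd0|]. exact Hdij. }
  assert (Hr : INR r = 2 * INR b + 1).
  { unfold r. rewrite plus_INR, mult_INR. simpl. ring. }
  assert (HK : INR K = 2 * INR (k0 omegaF k) + 1).
  { unfold K. rewrite plus_INR, mult_INR. simpl. ring. }
  assert (Hb0 : 0 <= INR b) by apply pos_INR.
  assert (Hk00 : 0 <= INR (k0 omegaF k)) by apply pos_INR.
  assert (Hclose : forall i, (N <= i <= N + g N)%nat -> d (x i) p <= 1 / (INR K + 1)).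
  { intros i Hi. apply HHm; [apply Hd0|].
    replace i with (N + (i - N))%nat by lia.
    pose proof (HFe r N (g N) p HpChi (i - N)%nat ltac:(lia)) as Hf.
    fold b.
    assert (E : 1 / (INR r + 1) + 1 / (INR r + 1) = 1 / (INR b + 1)).
    { rewrite Hr. field. lra. }
    lra. }
  assert (Hkk : (k <= k0 omegaF k)%nat) by (unfold k0; lia).
  assert (Hom : (omegaF k <= K)%nat).
  { unfold K, k0. pose proof (Nat.div_mod (omegaF k) 2 ltac:(lia)).
    pose proof (Nat.mod_upper_bound (omegaF k) 2 ltac:(lia)). lia. }
  apply le_INR in Hkk. apply le_INR in Hom.
  assert (HkR : 0 <= INR k) by apply pos_INR.
  intros i j Hi Hj2. split.
  - pose proof (Hclose i Hi) as Ci. pose proof (Hclose j Hj2) as Cj.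
    pose proof (Htri (x i) p (x j)) as Tr. rewrite (Hsym p (x j)) in Tr.
    assert (1 / (INR K + 1) + 1 / (INR K + 1) <= 1 / (INR k + 1)).
    { rewrite HK. replace (1 / (2 * INR (k0 omegaF k) + 1 + 1) + 1 / (2 * INR (k0 omegaF k) + 1 + 1))
        with (1 / (INR (k0 omegaF k) + 1)) by (field; lra).
      apply Rmult_le_compat_l; [lra|]. apply Rinv_le_contravar; lra. }
    lra.
  - apply (Hcl k (x i) p HpD).
    eapply Rle_trans; [apply Hclose; exact Hi|].
    apply Rmult_le_compat_l; [lra|].
    apply Rinv_le_contravar; [pose proof (pos_INR (omegaF k)); lra|lra].
Qed.
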